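(* Let $M := \langle x,y,z \mid (xy,\, yzx)\rangle$. (1) For all $k,l\in\mathbb{N}^+$, $\mathsf{L}_M(x^ky^l) = [k+l,\ 2(k+l)-1]$. (2) For all $k,l\in\mathbb{N}^+$, $\rho(\mathsf{L}_M(x^ky^l)) = 2 - \frac{1}{k+l}$. (3) For every integer $n\ge 2$ and all $k,l\in\mathbb{N}^+$ with $k+l=n$, one has $\rho(\mathsf{L}_M(a)) \le \rho(\mathsf{L}_M(x^ky^l))$ for every word $a\in\langle x,y,z\rangle$ with $|a| = n$.
   Context: $\langle x,y,z\rangle$ is the free monoid on $\{x,y,z\}$, and $M$ is the monoid with generators $x,y,z$ subject to the single relation $xy = yzx$. $|a|$ is word length; $a=_M b$ means equal images in $M$; $\mathsf{L}_M(a):=\{|b| : b\in\langle x,y,z\rangle,\ b=_M a\}$. $[s,t]$ denotes the set of integers between $s$ and $t$. For $L\subseteq\mathbb{N}$ with $L\cap\mathbb{N}^+\neq\emptyset$, $\rho(L):=\sup(L\cap\mathbb{N}^+)/\min(L\cap\mathbb{N}^+)$. *)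

(* Defs.v *)
From Stdlib Require Import Relations.
From mathcomp Require Import all_boot all_order all_algebra.
From mathcomp Require Import all_classical all_reals all_analysis.
Set Implicit Arguments. Unset Strict Implicit. Unset Printing Implicit Defensive.
Import Order.TTheory GRing.Theory Num.Theory.

(* The alphabet {x,y,z}; words of the free monoid <x,y,z> are seq letter. *)
Inductive letter := X | Y | Z.

Inductive stepM : seq letter -> seq letter -> Prop :=
  | stepM_intro (u v : seq letter) :
      stepM (u ++ [:: X; Y] ++ v) (u ++ [:: Y; Z; X] ++ v).

(* a =_M b : equality in M = <x,y,z | xy = yzx>, i.e. the congruence
   generated by (xy, yzx) = equivalence closure of the contextual step. *)
Definition eqM : relation (seq letter) := clos_refl_sym_trans _ stepM.

Definition LM (a : seq letter) : set nat := [set n | exists b, eqM b a /\ size b = n].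

Definition minpos (L : set nat) : nat :=
  match pselect (exists n, `[< L n /\ (0 < n)%N >]) with
  | left h => ex_minn h
  | right _ => 0%N
  end.

Local Open Scope ring_scope.
Local Open Scope ereal_scope.
(* rho(L) = sup (L ∩ N^+) / min (L ∩ N^+), as an extended real
   (equal to +oo when L ∩ N^+ is unbounded). *)
Definition rho {R : realType} (L : set nat) : \bar R :=
  ereal_sup [set ((m%:R / (minpos L)%:R)%R)%:E | m in [set m | L m /\ (0 < m)%N]].

(* Main.v *)
Require Import Defs.
From Stdlib Require Import Relations.
From mathcomp Require Import all_boot all_order all_algebra.
From mathcomp Require Import all_classical all_reals all_analysis.
From mathcomp Require Import zify ring lra.
Import Order.TTheory GRing.Theory Num.Theory.

Definition isX c := if c is X then true else false.
Definition isY c := if c is Y then true else false.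
Definition isZ c := if c is Z then true else false.

Lemma size_cnt w : size w = (count isX w + count isY w + count isZ w)%N.
Proof. elim: w => [|c w IH] //=; case: c => /=; lia. Qed.

Definition hstep (b : bool) c := match c with X => true | Y => b | Z => false end.
Fixpoint hy (v : seq letter) : bool :=
  match v with [::] => false
  | c :: v' => match c with Y => true | X => hy v' | Z => false end end.
Fixpoint Qaux (b : bool) (v : seq letter) : nat :=
  match v with [::] => 0%N
  | c :: v' => ((b && hy v) + Qaux (hstep b c) v')%N end.
Definition Q w := Qaux false w.

Lemma hy_step u v : hy (u ++ X :: Y :: v) = hy (u ++ Y :: Z :: X :: v).
Proof. by elim: u => [|c u IH] //=; case: c. Qed.

Lemma Qaux_step u v b :
  Qaux b (u ++ X :: Y :: v) = (Qaux b (u ++ Y :: Z :: X :: v)).+1.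
Proof.
elim: u b => [|c u IH] b /=.
  by rewrite !andbT !andbF; lia.
by rewrite IH hy_step addnS.
Qed.

Lemma Qaux_le b v : (Qaux b v <= size v)%N.
Proof. elim: v b => [|c v IH] b //=; rewrite -add1n; apply: leq_add; [exact: leq_b1 | exact: IH]. Qed.

Lemma Q_le w : (Q w <= size w - 1)%N.
Proof. case: w => [|c w] //=; rewrite subn1 /=; exact: Qaux_le. Qed.

Lemma hy_xy m l : (0 < l)%N -> hy (nseq m X ++ nseq l Y).
Proof. by move=> lp; elim: m => [|m IH] //=; case: l lp. Qed.

Lemma Qaux_y l : Qaux true (nseq l Y) = l.
Proof. by elim: l => [|l IH] //=; rewrite IH. Qed.

Lemma Qaux_xy m l : (0 < l)%N -> Qaux true (nseq m X ++ nseq l Y) = (m + l)%N.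
Proof.
move=> lp; elim: m => [|m IH] /=; first exact: Qaux_y.
by rewrite IH hy_xy.
Qed.

Lemma Q_xy k l : (0 < k)%N -> (0 < l)%N -> Q (nseq k X ++ nseq l Y) = (k + l - 1)%N.
Proof. case: k => [|k] // _ lp; rewrite /Q /= Qaux_xy //; lia. Qed.

Lemma eqM_inv a b : eqM a b ->
  [/\ count isX a = count isX b, count isY a = count isY b &
      (count isZ a + Q a = count isZ b + Q b)%N].
Proof.
elim => {a b}.
- move=> a b [u v]; rewrite /Q !count_cat /= Qaux_step; split; lia.
- by move=> a.
- by move=> a b _ [*]; split.
- by move=> a b c _ [? ? ?] _ [? ? ?]; split; lia.
Qed.

Lemma eqM_size b w : eqM b w -> (size b <= 2 * size w - 1)%N.
Proof.
move=> /eqM_inv [h1 h2 h3]; have := Q_le w; rewrite !size_cnt; lia.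
Qed.

Fixpoint rep (s : seq letter) n := if n is n'.+1 then s ++ rep s n' else [::].
Lemma size_rep s n : size (rep s n) = (n * size s)%N.
Proof. elim: n => [|n IH] //=; rewrite size_cat IH mulSn; lia. Qed.

Lemma eqM_step a b : stepM a b -> eqM a b.
Proof. exact: rst_step. Qed.
Lemma eqM_sym a b : eqM a b -> eqM b a.
Proof. exact: rst_sym. Qed.
Lemma eqM_trans a b c : eqM a b -> eqM b c -> eqM a c.
Proof. exact: rst_trans. Qed.

Definition P1 k' i j := nseq k' X ++ rep [:: Y; Z] i ++ X :: nseq j Y.

Lemma P1_eq k' i j : eqM (P1 k' i j) (P1 k' 0 (i + j)).
Proof.
elim: i j => [|i IH] j; first exact: rst_refl.
rewrite addSnnS; apply: (@eqM_trans _ (P1 k' i j.+1)) _ (IH j.+1).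
apply: eqM_sym; apply: eqM_step.
have -> : P1 k' i j.+1 = (nseq k' X ++ rep [:: Y; Z] i) ++ [:: X; Y] ++ nseq j Y.
  by rewrite /P1 -catA.
have -> : P1 k' i.+1 j = (nseq k' X ++ rep [:: Y; Z] i) ++ [:: Y; Z; X] ++ nseq j Y.
  rewrite /P1 -catA /=.
  suff -> : rep [:: Y; Z] i ++ [:: Y, Z, X & nseq j Y] = (Y :: Z :: rep [:: Y; Z] i) ++ X :: nseq j Y by [].
  by elim: i {IH} => [|i IHi] //=; rewrite IHi.
exact: stepM_intro.
Qed.

Definition P2 l' a b := nseq a X ++ Y :: Z :: rep [:: X; Z] b ++ rep [:: Y; Z] l' ++ [:: X].

Lemma P2_eq l' a b : eqM (P2 l' a b) (P2 l' (a + b) 0).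
Proof.
elim: b a => [|b IH] a; first by rewrite addn0; exact: rst_refl.
rewrite -addSnnS; apply: (@eqM_trans _ (P2 l' a.+1 b)) _ (IH a.+1).
apply: eqM_sym; apply: eqM_step.
have -> : P2 l' a.+1 b = nseq a X ++ [:: X; Y] ++ (Z :: rep [:: X; Z] b ++ rep [:: Y; Z] l' ++ [:: X]).
  rewrite /P2 /=; move: (Y :: _) => r; by elim: a {IH} => [|a IHa] //=; rewrite IHa.
have -> : P2 l' a b.+1 = nseq a X ++ [:: Y; Z; X] ++ (Z :: rep [:: X; Z] b ++ rep [:: Y; Z] l' ++ [:: X]).
  by [].
exact: stepM_intro.
Qed.
Local Open Scope ring_scope.
Local Open Scope ereal_scope.

Lemma nseq_shift (a : nat) (c : letter) r : nseq a c ++ c :: r = c :: nseq a c ++ r.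
Proof. by elim: a => [|a IH] //=; rewrite IH. Qed.

Lemma part1 k l : (0 < k)%N -> (0 < l)%N ->
     LM (nseq k X ++ nseq l Y) = [set n : nat | (k + l <= n <= 2 * (k + l) - 1)%N]%classic.
Proof.
move=> kp lp; apply/seteqP; split => n /=.
  move=> [b [hb <-]]; have [h1 h2 h3] := eqM_inv _ _ hb.
  rewrite Q_xy // !count_cat !count_nseq /= in h1 h2 h3.
  rewrite size_cnt; apply/andP; split; lia.
move=> /andP [n1 n2].
case: k kp n1 n2 => [|k'] // _ n1 n2; case: l lp n1 n2 => [|l'] // _ n1 n2.
have E1 : P1 k' 0 l'.+1 = nseq k'.+1 X ++ nseq l'.+1 Y by rewrite /P1 /= nseq_shift.
case: (leqP n (k'.+1 + 2 * l'.+1)) => hn.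
  exists (P1 k' (n - (k'.+1 + l'.+1)) (l'.+1 - (n - (k'.+1 + l'.+1)))); split.
    rewrite -E1; apply: eqM_trans _ _ _ (P1_eq _ _ _) _.
    have -> : (n - (k'.+1 + l'.+1) + (l'.+1 - (n - (k'.+1 + l'.+1))))%N = l'.+1 by lia.
    exact: rst_refl.
  rewrite /P1 !size_cat size_nseq size_rep /= size_nseq; lia.
exists (P2 l' (k' - (n - (k'.+1 + 2 * l'.+1))) (n - (k'.+1 + 2 * l'.+1))); split.
  apply: eqM_trans _ _ _ (P2_eq _ _ _) _.
  have -> : (k' - (n - (k'.+1 + 2 * l'.+1)) + (n - (k'.+1 + 2 * l'.+1)))%N = k' by lia.
  rewrite -E1; have := P1_eq k' l'.+1 0; rewrite addn0 => H.
  apply: eqM_trans _ _ _ _ H; exact: rst_refl.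
rewrite /P2 !size_cat size_nseq /= !size_cat !size_rep /=; lia.
Qed.
Local Open Scope ring_scope.

Lemma ratio_le (R : realType) (m' m n : nat) : (0 < m)%N -> (m <= n)%N ->
  (m' <= 2 * m - 1)%N -> (m'%:R / m%:R : R) <= 2 - n%:R^-1.
Proof.
move=> mp mn hm.
have m0 : (0 : R) < m%:R by rewrite ltr0n.
have n0 : (0 : R) < n%:R by rewrite ltr0n; apply: leq_trans mn.
rewrite ler_pdivrMr // mulrBl.
have h1 : (m%:R / n%:R : R) <= 1 by rewrite ler_pdivrMr // mul1r ler_nat.
have h2 : (m'%:R : R) <= 2 * m%:R - 1.
  have : (m'%:R : R) <= (2 * m - 1)%:R by rewrite ler_nat.
  by rewrite natrB ?muln_gt0 // natrM.
rewrite mulrC in h1; lra.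
Qed.

Lemma ratio_eq (R : realType) (N : nat) : (0 < N)%N ->
  ((2 * N - 1)%:R / N%:R : R) = 2 - N%:R^-1.
Proof.
move=> Np; rewrite natrB ?muln_gt0 // natrM; field.
by rewrite pnatr_eq0 -lt0n.
Qed.

Local Open Scope ereal_scope.

Lemma minpos_spec (L : set nat) : (exists n, L n /\ (0 < n)%N) ->
  [/\ L (minpos L), (0 < minpos L)%N &
      forall n, L n -> (0 < n)%N -> (minpos L <= n)%N].
Proof.
move=> [n0 [L0 p0]]; rewrite /minpos; case: pselect => [h|h]; last first.
  by exfalso; apply: h; exists n0; apply/asboolP.
case: ex_minnP => p /asboolP [Lp pp] hmin; split => // n Ln np.
by apply: hmin; apply/asboolP.
Qed.

Lemma part2 (R : realType) k l : (0 < k)%N -> (0 < l)%N ->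
     @rho R (LM (nseq k X ++ nseq l Y)) = (2 - ((k + l)%:R)^-1)%:E.
Proof.
move=> kp lp; rewrite part1 //.
set S := [set n : nat | _]%classic.
have NP : (0 < k + l)%N by rewrite addn_gt0 kp.
have [Sm mp mmin] : [/\ S (minpos S), (0 < minpos S)%N &
      forall n, S n -> (0 < n)%N -> (minpos S <= n)%N].
  apply: minpos_spec; exists (k + l)%N; split => //; rewrite /S /=; apply/andP; split => //; lia.
have Em : minpos S = (k + l)%N.
  apply/eqP; rewrite eqn_leq; apply/andP; split.
    by apply: mmin => //; rewrite /S /=; apply/andP; split => //; lia.
  by move: Sm; rewrite /S /= => /andP[].
rewrite /rho Em; apply/eqP; rewrite eq_le; apply/andP; split.
  apply: ge_ereal_sup => _ [m [Smm _] <-]; rewrite lee_fin.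
  apply: ratio_le => //; by move: Smm; rewrite /S /= => /andP[].
apply: le_ereal_sup_tmp; exists (((2 * (k + l) - 1)%:R / (k + l)%:R)%R)%:E.
  exists (2 * (k + l) - 1)%N => //; split; last lia.
  rewrite /S /=; apply/andP; split => //; lia.
by rewrite ratio_eq.
Qed.

Lemma part3 (R : realType) (n : nat) : (2 <= n)%N -> forall k l : nat, (0 < k)%N -> (0 < l)%N ->
     (k + l = n)%N -> forall a : seq letter, size a = n ->
     @rho R (LM a) <= @rho R (LM (nseq k X ++ nseq l Y)).
Proof.
move=> n2 k l kp lp kln a sa; rewrite part2 // kln.
have [Lm mp mmin] := @minpos_spec (LM a)
   (ex_intro _ n (conj (ex_intro _ a (conj (rst_refl _ _ a) sa)) (ltn_trans (isT : (0 < 1)%N) n2))).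
set m := minpos (LM a) in Lm mp mmin *.
have mn : (m <= n)%N by apply: mmin; [exists a; split => //; exact: rst_refl | exact: ltn_trans (isT : (0 < 1)%N) n2].
have [w [hw sw]] := Lm.
rewrite /rho -/m; apply: ge_ereal_sup => _ [m' [[b [hb sb]] _] <-]; rewrite lee_fin.
apply: ratio_le => //; rewrite -sb -sw; apply: eqM_size.
exact: eqM_trans _ _ _ hb (eqM_sym _ _ hw).
Qed.

Theorem lemma6p2 (R : realType) :
  (forall k l : nat, (0 < k)%N -> (0 < l)%N ->
     LM (nseq k X ++ nseq l Y) = [set n : nat | (k + l <= n <= 2 * (k + l) - 1)%N]%classic) /\
  (forall k l : nat, (0 < k)%N -> (0 < l)%N ->
     @rho R (LM (nseq k X ++ nseq l Y)) = (2 - ((k + l)%:R)^-1)%:E) /\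
  (forall n : nat, (2 <= n)%N -> forall k l : nat, (0 < k)%N -> (0 < l)%N ->
     (k + l = n)%N -> forall a : seq letter, size a = n ->
     @rho R (LM a) <= @rho R (LM (nseq k X ++ nseq l Y))).
Proof.
split; first exact: part1.
split; first exact: part2.
exact: part3.
Qed.
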